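(* Let $\mathcal{A}\in\mathbb{C}^{I_{1\ldots N}\times I_{1\ldots N}}$ with $\mathcal{A}\neq\mathcal{O}$, and let $\mathcal{M},\mathcal{N}\in\mathbb{C}^{I_{1\ldots N}\times I_{1\ldots N}}$ be Hermitian positive definite tensors. Then $$1\le\|\mathcal{A}\|_{\mathcal{M}\mathcal{N}}\,\|\mathcal{A}^{\dagger}_{\mathcal{M},\mathcal{N}}\|_{\mathcal{N}\mathcal{M}}\le4\,w(\tilde{\mathcal{A}})\,w(\tilde{\mathcal{A}}^{\dagger}),$$ where $\tilde{\mathcal{A}}=\mathcal{M}^{1/2}*_N\mathcal{A}*_N\mathcal{N}^{-1/2}$.
   Context: Write $I_{1\ldots N}$ for $I_1\times\cdots\times I_N$; $\mathcal{O}$ is the zero tensor. Einstein product: $(\mathcal{A}*_N\mathcal{B})_{i_1\ldots i_Nj_1\ldots j_L}=\sum_{k_1,\ldots,k_N}a_{i_1\ldots i_Nk_1\ldots k_N}b_{k_1\ldots k_Nj_1\ldots j_L}$ (also when $\mathcal{B}\in\mathbb{C}^{I_{1\ldots N}}$). $\mathcal{A}^H$ is the conjugate transpose; inverses are w.r.t. $*_N$. $\langle\mathcal{X},\mathcal{Y}\rangle=\mathcal{Y}^H*_N\mathcal{X}$, $\|\mathcal{X}\|=\langle\mathcal{X},\mathcal{X}\rangle^{1/2}$. $\mathcal{M}$ is Hermitian positive definite if $\mathcal{M}^H=\mathcal{M}$ and $\langle\mathcal{M}*_N\mathcal{X},\mathcal{X}\rangle>0$ for nonzero $\mathcal{X}$;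 $\mathcal{M}^{1/2}$ is its unique Hermitian positive definite square root and $\mathcal{N}^{-1/2}=(\mathcal{N}^{1/2})^{-1}$. Weighted norms: $\|\mathcal{X}\|_{\mathcal{M}}=\langle\mathcal{M}*_N\mathcal{X},\mathcal{X}\rangle^{1/2}$, $\|\mathcal{X}\|_{\mathcal{N}}=\langle\mathcal{N}*_N\mathcal{X},\mathcal{X}\rangle^{1/2}$, $\|\mathcal{A}\|_{\mathcal{M}\mathcal{N}}=\sup\{\|\mathcal{A}*_N\mathcal{X}\|_{\mathcal{M}}:\|\mathcal{X}\|_{\mathcal{N}}=1\}$, $\|\mathcal{B}\|_{\mathcal{N}\mathcal{M}}=\sup\{\|\mathcal{B}*_N\mathcal{X}\|_{\mathcal{N}}:\|\mathcal{X}\|_{\mathcal{M}}=1\}$. Numerical range $W(\mathcal{A})=\{\langle\mathcal{A}*_N\mathcal{X},\mathcal{X}\rangle:\|\mathcal{X}\|=1\}$ and numerical radius $w(\mathcal{A})=\max\{|z|:z\in W(\mathcal{A})\}$. Weighted Moore-Penrose inverse $\mathcal{A}^{\dagger}_{\mathcal{M},\mathcal{N}}$: the unique $\mathcal{X}$ with $\mathcal{A}*_N\mathcal{X}*_N\mathcal{A}=\mathcal{A}$, $\mathcal{X}*_N\mathcal{A}*_N\mathcal{X}=\mathcal{X}$, $(\mathcal{M}*_N\mathcal{A}*_N\mathcal{X})^H=\mathcal{M}*_N\mathcal{A}*_N\mathcal{X}$, $(\mathcal{N}*_N\mathcal{X}*_N\mathcal{A})^H=\mathcal{N}*_N\mathcal{X}*_N\mathcal{A}$;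 $\tilde{\mathcal{A}}^{\dagger}$ is the Moore-Penrose inverse (identity weights). *)

(* Defs.v *)
From HB Require Import structures.
From mathcomp Require Import all_boot all_order all_algebra.
From mathcomp Require Import boolp classical_sets reals.
From mathcomp.real_closed Require Import complex.
Set Implicit Arguments. Unset Strict Implicit. Unset Printing Implicit Defensive.
Import Order.TTheory GRing.Theory Num.Theory.
Local Open Scope ring_scope.
Local Open Scope classical_set_scope.

Section Tensors.
Variables (R : realType) (N : nat) (I : 'I_N -> nat).

Definition idx : finType := {dffun forall k : 'I_N, 'I_(I k)}.

(* tensors in C^{I_1..N x I_1..N} and in C^{I_1..N} *)
Definition tensor := idx -> idx -> R[i].
Definition vtensor := idx -> R[i].

Definition ein (A B : tensor) : tensor := fun i j => \sum_k A i k * B k j.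
Definition einv (A : tensor) (X : vtensor) : vtensor := fun i => \sum_k A i k * X k.

Definition zeroT : tensor := fun _ _ => 0.
Definition idT : tensor := fun i j => if i == j then 1 else 0.

Definition ctr (A : tensor) : tensor := fun i j => Num.conj (A j i).

Definition inner (X Y : vtensor) : R[i] := \sum_i Num.conj (Y i) * X i.

Definition vnorm (X : vtensor) : R := Num.sqrt (complex.Re (inner X X)).

Definition hpd (M : tensor) : Prop :=
  ctr M = M /\ forall X : vtensor, X <> (fun _ => 0) -> 0 < inner (einv M X) X.

(* weighted norm ||X||_M = <M *N X, X>^{1/2} (the inner product is real >= 0 for HPD M) *)
Definition wnorm (M : tensor) (X : vtensor) : R := Num.sqrt (complex.Re (inner (einv M X) X)).

Definition opnorm (M Nw A : tensor) : R :=
  sup [set wnorm M (einv A X) | X in [set X | wnorm Nw X = 1]].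

Definition numrange (A : tensor) : set R[i] :=
  [set inner (einv A X) X | X in [set X | vnorm X = 1]].
Definition numradius (A : tensor) : R := sup [set Normc.normc z | z in numrange A].

Definition is_hpd_sqrt (S M : tensor) : Prop := hpd S /\ ein S S = M.

Definition is_inv (Y S : tensor) : Prop := ein S Y = idT /\ ein Y S = idT.

Definition is_wmpinv (M Nw A X : tensor) : Prop :=
  [/\ ein (ein A X) A = A,
      ein (ein X A) X = X,
      ctr (ein M (ein A X)) = ein M (ein A X)
    & ctr (ein Nw (ein X A)) = ein Nw (ein X A)].

End Tensors.

(* Main.v *)
Require Import Defs.
From HB Require Import structures.
From mathcomp Require Import all_boot all_order all_algebra.
From mathcomp Require Import boolp classical_sets reals.
From mathcomp.real_closed Require Import complex.
From mathcomp Require Import ring.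
Import Order.TTheory GRing.Theory Num.Theory.
Local Open Scope ring_scope.

Section Alg.
Variables (R : realType) (N : nat) (I : 'I_N -> nat).
Local Notation T := (tensor R I).
Local Notation V := (vtensor R I).
Implicit Types (A B C : T) (X Y Z : V).

Lemma einA A B C : ein (ein A B) C = ein A (ein B C).
Proof.
apply: funext => i; apply: funext => j; rewrite /ein.
under eq_bigr do rewrite big_distrl /=.
rewrite exchange_big /=; apply: eq_bigr => k _.
rewrite big_distrr /=; apply: eq_bigr => l _; by rewrite mulrA.
Qed.

Lemma ctrK A : ctr (ctr A) = A.
Proof. by apply: funext => i; apply: funext => j; rewrite /ctr conjCK. Qed.

Lemma ctr_ein A B : ctr (ein A B) = ein (ctr B) (ctr A).
Proof.
apply: funext => i; apply: funext => j; rewrite /ctr /ein rmorph_sum.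
by apply: eq_bigr => k _; rewrite rmorphM mulrC.
Qed.

Lemma ctr_id : ctr (@idT R N I) = @idT R N I.
Proof.
apply: funext => i; apply: funext => j; rewrite /ctr /idT.
case: eqP => [->|h]; case: eqP => //; rewrite ?eqxx; try (by move=> e; case: h); by rewrite ?conjC1 ?conjC0.
Qed.

Lemma ein_id1 A : ein (@idT R N I) A = A.
Proof.
apply: funext => i; apply: funext => j; rewrite /ein /idT.
rewrite (bigD1 i) //= eqxx mul1r big1 ?addr0 // => k /negbTE.
by rewrite eq_sym => ->; rewrite mul0r.
Qed.

Lemma ein_id2 A : ein A (@idT R N I) = A.
Proof.
apply: funext => i; apply: funext => j; rewrite /ein /idT.
rewrite (bigD1 j) //= eqxx mulr1 big1 ?addr0 // => k /negbTE ->.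
by rewrite mulr0.
Qed.

Lemma einv_ein A B X : einv (ein A B) X = einv A (einv B X).
Proof.
apply: funext => i; rewrite /einv /ein.
under eq_bigr do rewrite big_distrl /=.
rewrite exchange_big /=; apply: eq_bigr => k _.
rewrite big_distrr /=; apply: eq_bigr => l _; by rewrite mulrA.
Qed.

Lemma inner_ctr A X Y : inner (einv (ctr A) X) Y = inner X (einv A Y).
Proof.
rewrite /inner /einv /ctr.
under eq_bigr do rewrite big_distrr /=.
rewrite exchange_big /=; apply: eq_bigr => k _.
rewrite rmorph_sum big_distrl /=; apply: eq_bigr => l _.
by rewrite rmorphM /=; rewrite mulrCA mulrA.
Qed.

Lemma inner_conj X Y : inner Y X = Num.conj (inner X Y).
Proof.
rewrite /inner rmorph_sum; apply: eq_bigr => i _.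
by rewrite rmorphM /= conjCK mulrC. Qed.

Lemma inner_ge0 X : 0 <= inner X X.
Proof.
rewrite /inner; apply: sumr_ge0 => i _.
by rewrite mulrC -normCK exprn_ge0.
Qed.

Lemma inner_eq0 X : inner X X = 0 -> X = (fun _ => 0).
Proof.
rewrite /inner => /eqP; rewrite psumr_eq0 => [/allP H|i _]; last first.
  by rewrite mulrC -normCK exprn_ge0.
apply: funext => i; have := H i; rewrite mem_index_enum => /(_ isT).
by rewrite mulrC -normCK expf_eq0 /= normr_eq0 => /eqP.
Qed.

Lemma einv_sub A X Y : einv A (fun i => X i - Y i) = fun i => einv A X i - einv A Y i.
Proof.
apply: funext => i; rewrite /einv -sumrB; apply: eq_bigr => k _; by rewrite mulrBr.
Qed.

Lemma inner0l Y : inner (fun _ => 0) Y = 0.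
Proof. by rewrite /inner big1 // => i _; rewrite mulr0. Qed.

Lemma hpd_inj S A B : hpd S -> ein S A = ein S B -> A = B.
Proof.
case=> _ hS e; apply: funext => i; apply: funext => j.
set v : V := fun k => A k j - B k j.
have ev : einv S v = fun _ => 0.
  apply: funext => k; rewrite /v einv_sub /einv.
  have := congr1 (fun F => F k j) e; rewrite /ein /= => ->; by rewrite subrr.
case: (pselect (v = fun _ => 0)) => [v0|nv0].
  by have := congr1 (fun F => F i) v0; rewrite /v /= => /eqP; rewrite subr_eq0 => /eqP.
by have := hS v nv0; rewrite ev inner0l ltxx.
Qed.

Lemma cont A B : A = B -> forall C, ein A C = ein B C.
Proof. by move=> ->. Qed.

Lemma key A D M W Mh Nh Ni Tt :
  ein (ein A D) A = A -> ein (ein D A) D = D ->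
  ctr (ein M (ein A D)) = ein M (ein A D) ->
  ctr (ein W (ein D A)) = ein W (ein D A) ->
  let B := ein (ein Mh A) Ni in
  ein (ein B Tt) B = B -> ein (ein Tt B) Tt = Tt ->
  ctr (ein B Tt) = ein B Tt -> ctr (ein Tt B) = ein Tt B ->
  hpd Mh -> ein Mh Mh = M -> ctr Nh = Nh -> ein Nh Nh = W ->
  ein Nh Ni = @idT R N I -> ein Ni Nh = @idT R N I ->
  ein Tt Mh = ein Nh D.
Proof.
move=> p1 p2 p3 p4 B q1 q2 q3 q4 hMh mh hNh nh ni1 ni2.
have hMh' : ctr Mh = Mh by case: hMh.
have hM : ctr M = M by rewrite -mh ctr_ein hMh'.
have ni3 : ein (ctr Ni) Nh = @idT R N I by rewrite -{1}hNh -ctr_ein ni1 ctr_id.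
move: q1 q2 q3 q4; rewrite /B => q1 q2 q3 q4.
have P1 (Y : T) : ein A (ein D (ein A Y)) = ein A Y by rewrite -!einA p1.
have P2 (Y : T) : ein D (ein A (ein D Y)) = ein D Y by rewrite -!einA p2.
have P3 (Y : T) : ein (ctr D) (ein (ctr A) (ein M Y)) = ein M (ein A (ein D Y)).
  have p3l : ctr (ein (ein M A) D) = ein (ein M A) D by rewrite einA.
  by rewrite -!einA -p3l !ctr_ein hM !einA.
have P4 (Y : T) : ein (ctr A) (ein (ctr D) (ein W Y)) = ein W (ein D (ein A Y)).
  have hW : ctr W = W by rewrite -nh ctr_ein hNh.
  have p4l : ctr (ein (ein W D) A) = ein (ein W D) A by rewrite einA.
  by rewrite -!einA -p4l !ctr_ein hW !einA.
have P1' (Y : T) : ein (ctr A) (ein (ctr D) (ein (ctr A) Y)) = ein (ctr A) Y.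
  by rewrite -!einA -!ctr_ein -einA p1.
have Q1 (Y : T) : ein Mh (ein A (ein Ni (ein Tt (ein Mh (ein A (ein Ni Y))))))
   = ein Mh (ein A (ein Ni Y)) by move: q1; rewrite -!einA => ->.
have Q2 (Y : T) : ein Tt (ein Mh (ein A (ein Ni (ein Tt Y)))) = ein Tt Y by move: q2; rewrite -!einA => ->.
have Q3 (Y : T) : ein (ctr Tt) (ein (ctr Ni) (ein (ctr A) (ein Mh Y)))
   = ein Mh (ein A (ein Ni (ein Tt Y)))
  by rewrite -!einA -q3 !ctr_ein hMh' !einA.
have Q4 (Y : T) : ein (ctr Ni) (ein (ctr A) (ein Mh (ein (ctr Tt) Y)))
   = ein Tt (ein Mh (ein A (ein Ni Y)))
  by move: q4; rewrite -!einA => q4; rewrite -q4 !ctr_ein hMh' !einA.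
have MH (Y : T) : ein Mh (ein Mh Y) = ein M Y by rewrite -einA mh.
have NH (Y : T) : ein Nh (ein Nh Y) = ein W Y by rewrite -einA nh.
have NI1 (Y : T) : ein Nh (ein Ni Y) = Y by rewrite -einA ni1 ein_id1.
have NI2 (Y : T) : ein Ni (ein Nh Y) = Y by rewrite -einA ni2 ein_id1.
have NI3 (Y : T) : ein (ctr Ni) (ein Nh Y) = Y by rewrite -einA ni3 ein_id1.
have sa (Y : T) : ein (ctr A) (ein M (ein A (ein D Y))) = ein (ctr A) (ein M Y).
  by rewrite -P3 P1'.
have sc (Y : T) : ein Tt (ein Mh Y) = ein Tt (ein Mh (ein A (ein Ni (ein Nh (ein D Y))))).
  by rewrite NI2 -{1}Q2 -Q3 MH -sa -MH Q3 Q2.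
have sd (Y : T) : ein (ctr Ni) (ein (ctr A) (ein (ctr D) (ein Nh Y)))
    = ein Nh (ein D (ein A (ein Ni Y))).
  by rewrite -{1}(NI1 Y) NH P4 -NH NI3.
have se (Y : T) : ein A (ein Ni (ein Tt (ein Mh (ein A (ein Ni Y))))) = ein A (ein Ni Y).
  exact: (hpd_inj _ _ _ hMh (Q1 Y)).
have se' (Y : T) : ein (ctr Ni) (ein (ctr A) (ein Mh (ein (ctr Tt) (ein (ctr Ni) (ein (ctr A) Y)))))
    = ein (ctr Ni) (ein (ctr A) Y).
  have e0 := se (@idT R N I); rewrite ein_id2 in e0.
  have e1 := congr1 (@ctr R N I) e0; rewrite !ctr_ein hMh' in e1.
  by rewrite -!einA e1.
have sf (Y : T) : ein Tt (ein Mh (ein A (ein Ni (ein Nh (ein D (ein A (ein Ni Y)))))))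
    = ein Nh (ein D (ein A (ein Ni Y))).
  by rewrite -sd -Q4 se' sd.
have sg (Y : T) : ein Tt (ein Mh (ein A (ein Ni (ein Nh (ein D Y))))) = ein Nh (ein D Y).
  by rewrite -{1}P2 -{1}(NI2 (ein D Y)) sf NI2 P2.
by rewrite -(ein_id2 (ein Tt Mh)) -(ein_id2 (ein Nh D)) !einA sc sg.
Qed.

Definition vadd X Y : V := fun i => X i + Y i.
Definition vscl (c : R[i]) X : V := fun i => c * X i.

Lemma einvD B X Y : einv B (vadd X Y) = vadd (einv B X) (einv B Y).
Proof.
apply: funext => i; rewrite /einv /vadd -big_split /=.
by apply: eq_bigr => k _; rewrite mulrDr.
Qed.

Lemma einvZ B c X : einv B (vscl c X) = vscl c (einv B X).
Proof.
apply: funext => i; rewrite /einv /vscl big_distrr /=.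
by apply: eq_bigr => k _; rewrite mulrCA.
Qed.

Lemma innerDl X Y Z : inner (vadd X Y) Z = inner X Z + inner Y Z.
Proof. rewrite /inner -big_split /=; apply: eq_bigr => k _; by rewrite mulrDr. Qed.

Lemma innerZl c X Z : inner (vscl c X) Z = c * inner X Z.
Proof. rewrite /inner big_distrr /=; apply: eq_bigr => k _; by rewrite mulrCA. Qed.

Lemma innerDr X Y Z : inner Z (vadd X Y) = inner Z X + inner Z Y.
Proof. rewrite /inner -big_split /=; apply: eq_bigr => k _; by rewrite rmorphD mulrDl. Qed.

Lemma innerZr c X Z : inner Z (vscl c X) = Num.conj c * inner Z X.
Proof. rewrite /inner big_distrr /=; apply: eq_bigr => k _; by rewrite rmorphM mulrA. Qed.

Lemma ge0_RC (z : R[i]) : 0 <= z -> z = ((complex.Re z)%:C)%C.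
Proof. by case: z => a b; rewrite lecE /= => /andP[/eqP -> _]. Qed.

Lemma Re_inner_ge0 X : 0 <= complex.Re (inner X X).
Proof. by have := inner_ge0 X; rewrite lecE => /andP[_]. Qed.

Lemma vnormC X : ((vnorm X ^+ 2)%:C)%C = inner X X.
Proof. by rewrite /vnorm sqr_sqrtr ?Re_inner_ge0 // -ge0_RC // inner_ge0. Qed.

Lemma vnorm_ge0 X : 0 <= vnorm X.
Proof. exact: sqrtr_ge0. Qed.

Lemma wnorm_sqrt S M X : ctr S = S -> ein S S = M -> wnorm M X = vnorm (einv S X).
Proof. by move=> hS <-; rewrite /wnorm /vnorm einv_ein -{1}hS inner_ctr. Qed.

Lemma ReM_real k (z : R[i]) : complex.Re ((k%:C)%C * z) = k * complex.Re z.
Proof. by case: z => a b /=; rewrite mul0r subr0. Qed.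

Lemma conj_real (t : R) : Num.conj ((t%:C)%C) = (t%:C)%C.
Proof. exact: conjc_real. Qed.

Lemma inner_scl2 (t : R) X Y :
  inner (vscl (t%:C)%C X) (vscl (t%:C)%C Y) = ((t ^+ 2)%:C)%C * inner X Y.
Proof. by rewrite innerZl innerZr conj_real mulrA -rmorphM expr2. Qed.

Lemma vnormZ (t : R) X : 0 <= t -> vnorm (vscl (t%:C)%C X) = t * vnorm X.
Proof.
move=> ht; rewrite /vnorm inner_scl2 ReM_real sqrtrM ?sqr_ge0 //.
by rewrite sqrtr_sqr ger0_norm.
Qed.

Lemma wnormZ W (t : R) X : 0 <= t -> wnorm W (vscl (t%:C)%C X) = t * wnorm W X.
Proof.
move=> ht; rewrite /wnorm einvZ inner_scl2 ReM_real sqrtrM ?sqr_ge0 //.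
by rewrite sqrtr_sqr ger0_norm.
Qed.

Lemma coord_le1 X i : vnorm X = 1 -> `|X i| <= 1.
Proof.
move=> h1.
have e : inner X X = 1 by rewrite -vnormC h1 expr1n.
have : `|X i| ^+ 2 <= inner X X.
  rewrite /inner (bigD1 i) //= -normCKC lerDl; apply: sumr_ge0 => j _.
  by rewrite -normCKC exprn_ge0.
rewrite e -[X in _ <= X](expr1n _ 2) ler_pXn2r //; by rewrite qualifE /=.
Qed.

Lemma nr_ub B : has_ubound [set Normc.normc z | z in numrange B].
Proof.
exists (\sum_i \sum_k Normc.normc (B i k)); move=> _ [z [X hX <-] <-].
rewrite -lecR.
have -> : ((\sum_i \sum_k Normc.normc (B i k))%:C)%C = \sum_i \sum_k `|B i k|.
  by rewrite rmorph_sum; apply: eq_bigr => i _; rewrite rmorph_sum.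
change (`|inner (einv B X) X| <= \sum_i \sum_k `|B i k|).
rewrite /inner /einv; apply: le_trans (ler_norm_sum _ _ _) _.
apply: ler_sum => i _; rewrite normrM.
apply: le_trans (_ : _ <= `|Num.conj (X i)| * \sum_k (`|B i k| * `|X k|)) _.
  rewrite ler_wpM2l //; apply: le_trans (ler_norm_sum _ _ _) _.
  by apply: ler_sum => k _; rewrite normrM.
rewrite big_distrr /=; apply: ler_sum => k _; rewrite norm_conjC mulrCA -[X in _ <= X]mulr1.
rewrite ler_wpM2l //; rewrite -[1]mul1r; apply: ler_pM => //.
  exact: coord_le1. exact: coord_le1.
Qed.

Lemma sup_ge0' (E : set R) : (forall x, E x -> 0 <= x) -> 0 <= sup E.
Proof.
move=> h; case: (pselect (has_sup E)) => [hs|hn]; last by rewrite sup_out.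
case: (hs) => [[x Ex] ub]; apply: le_trans (h x Ex) _.
exact: ub_le_sup.
Qed.

Lemma normc_ge0 (z : R[i]) : 0 <= Normc.normc z.
Proof. by case: z => a b; exact: sqrtr_ge0. Qed.

Lemma nr_ge0 B : 0 <= numradius B.
Proof. by apply: sup_ge0' => _ [z _ <-]; exact: normc_ge0. Qed.

Lemma normc_real (t : R) : Normc.normc ((t%:C)%C) = `|t|.
Proof. by rewrite /Normc.normc /= expr0n /= addr0 sqrtr_sqr. Qed.

Lemma inner0r X : inner X (fun _ => 0) = 0.
Proof. by rewrite /inner big1 // => i _; rewrite rmorph0 mul0r. Qed.

Lemma einv0 B : einv B (fun _ => 0) = fun _ => 0.
Proof. by apply: funext => i; rewrite /einv big1 // => k _; rewrite mulr0. Qed.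

Lemma vnorm0 X : vnorm X = 0 -> X = fun _ => 0.
Proof.
move=> h; apply: inner_eq0; by rewrite -vnormC h expr0n.
Qed.

Lemma vnorm_zero : vnorm (fun _ : idx I => (0 : R[i])) = 0.
Proof. by rewrite /vnorm inner0r /= sqrtr0. Qed.

Lemma nr_le B X : Normc.normc (inner (einv B X) X) <= numradius B * vnorm X ^+ 2.
Proof.
have := vnorm_ge0 X; rewrite le_eqVlt => /orP[/eqP n0|npos].
  by rewrite -n0 expr0n mulr0 (vnorm0 X (esym n0)) inner0r /Normc.normc /= expr0n addr0 sqrtr0.
set n := vnorm X in npos *; set c := n^-1.
have hc : 0 <= c by rewrite /c invr_ge0 ltW.
set U := vscl (c%:C)%C X.
have hU : vnorm U = 1 by rewrite /U vnormZ // /c mulVf // gt_eqF.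
have h : Normc.normc (inner (einv B U) U) <= numradius B.
  apply: ub_le_sup; first exact: nr_ub.
  by exists (inner (einv B U) U) => //; exists U.
move: h; rewrite /U einvZ inner_scl2 Normc.normcM normc_real ger0_norm ?sqr_ge0 // => h.
have -> : Normc.normc (inner (einv B X) X)
   = n ^+ 2 * (c ^+ 2 * Normc.normc (inner (einv B X) X)).
  by rewrite mulrA -exprMn /c mulfV ?gt_eqF // expr1n mul1r.
by rewrite mulrC ler_wpM2r // sqr_ge0.
Qed.

Lemma nr_leC B z : `|inner (einv B z) z| <= ((numradius B)%:C)%C * inner z z.
Proof.
rewrite -vnormC -rmorphM.
change ((Normc.normc (inner (einv B z) z))%:C%C <= ((numradius B * vnorm z ^+ 2)%:C)%C).
by rewrite lecR nr_le.
Qed.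

Lemma expand_s B x y c :
  inner (einv B (vadd x (vscl c y))) (vadd x (vscl c y)) =
  inner (einv B x) x + Num.conj c * inner (einv B x) y
  + c * inner (einv B y) x + c * Num.conj c * inner (einv B y) y.
Proof.
rewrite einvD einvZ !innerDl !innerDr !innerZl !innerZr; ring.
Qed.

Lemma expand_n x y c :
  inner (vadd x (vscl c y)) (vadd x (vscl c y)) =
  inner x x + Num.conj c * inner x y + c * inner y x + c * Num.conj c * inner y y.
Proof. rewrite !innerDl !innerDr !innerZl !innerZr; ring. Qed.

Lemma polarC B x y :
  `|inner (einv B x) y| <= ((numradius B)%:C)%C * (inner x x + inner y y).
Proof.
set w := ((numradius B)%:C)%C.
set z := fun c => vadd x (vscl c y).
set s := fun u => inner (einv B u) u.
have cj1 : Num.conj (1 : R[i]) = 1 by rewrite rmorph1.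
have cjm1 : Num.conj (-1 : R[i]) = -1 by rewrite rmorphN rmorph1.
have cji : Num.conj ('i : R[i]) = -'i by exact: conjCi.
have cjmi : Num.conj (-'i : R[i]) = 'i by rewrite rmorphN /= cji opprK.
have hj := @mulCii (complex_complex__canonical__Num_ClosedField R).
have E : 4 * inner (einv B x) y
   = s (z 1) - s (z (-1)) + 'i * s (z 'i) - 'i * s (z (-'i)).
  rewrite /s /z !expand_s cj1 cjm1 cji cjmi.
  move: hj; generalize ('i : R[i]) => j hj.
  apply/eqP; rewrite -subr_eq0; apply/eqP.
  transitivity ((j * j + 1) * (2 * inner (einv B x) y - 2 * inner (einv B y) x)).
    ring.
  by rewrite hj addNr mul0r.
have F : inner (z 1) (z 1) + inner (z (-1)) (z (-1)) + inner (z 'i) (z 'i)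
   + inner (z (-'i)) (z (-'i)) = 4 * (inner x x + inner y y).
  rewrite /z !expand_n cj1 cjm1 cji cjmi.
  move: hj; generalize ('i : R[i]) => j hj.
  apply/eqP; rewrite -subr_eq0; apply/eqP.
  transitivity ((j * j + 1) * (- 2 * inner y y)).
    ring.
  by rewrite hj addNr mul0r.
have h4 : `|4 * inner (einv B x) y| <= w * (4 * (inner x x + inner y y)).
  rewrite E -F !mulrDr.
  apply: le_trans (ler_normD _ _) _; rewrite normrN normrM normCi mul1r.
  apply: lerD; last exact: nr_leC.
  apply: le_trans (ler_normD _ _) _; rewrite normrM normCi mul1r.
  apply: lerD; last exact: nr_leC.
  apply: le_trans (ler_normD _ _) _; rewrite normrN.
  by apply: lerD; exact: nr_leC.
move: h4; rewrite normrM (ger0_norm (_ : 0 <= 4)) // mulrCA.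
by rewrite ler_pM2l.
Qed.

Lemma polarR B x y :
  Normc.normc (inner (einv B x) y) <= numradius B * (vnorm x ^+ 2 + vnorm y ^+ 2).
Proof.
have h := polarC B x y; rewrite -!vnormC -rmorphD -rmorphM in h.
by rewrite -lecR. Qed.

Lemma opB B x : vnorm (einv B x) <= 2 * numradius B * vnorm x.
Proof.
have w0 := nr_ge0 B.
set a := vnorm x; set b := vnorm (einv B x).
have a0 : 0 <= a := vnorm_ge0 x.
have := vnorm_ge0 (einv B x); rewrite -/b le_eqVlt => /orP[/eqP <-|bpos].
  by rewrite !mulr_ge0.
have apos : 0 < a.
  move: a0; rewrite le_eqVlt => /orP[/eqP a0|//].
  move: bpos; rewrite /b (vnorm0 x (esym a0)) einv0 vnorm_zero ltxx //.
set t := b / a.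
have t0 : 0 <= t by rewrite /t divr_ge0 // ltW.
have := polarR B (vscl (t%:C)%C x) (einv B x).
rewrite einvZ innerZl vnormZ // -/a -/b.
have -> : inner (einv B x) (einv B x) = ((b ^+ 2)%:C)%C by rewrite /b; symmetry; exact: vnormC.
rewrite -rmorphM normc_real ger0_norm ?mulr_ge0 ?sqr_ge0 //.
have -> : t * a = b by rewrite /t divfK // gt_eqF.
have -> : numradius B * (b ^+ 2 + b ^+ 2) = (2 * numradius B) * b ^+ 2 by ring.
rewrite ler_pM2r ?exprn_gt0 //.
rewrite /t ler_pdivrMr // (mulrC (numradius B)).
all: by rewrite ?invr_ge0 ltW.
Qed.

Local Open Scope classical_set_scope.
Lemma op_le M W A c : 0 <= c ->
  (forall X, wnorm W X = 1 -> wnorm M (einv A X) <= c) -> opnorm M W A <= c.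
Proof.
move=> c0 h; rewrite /opnorm.
set E := [set wnorm M (einv A X) | X in [set X : V | wnorm W X = 1]].
case: (pselect (E !=set0)) => [ne|e].
  by apply: ge_sup ne _ => _ [X hX <-]; exact: h.
have -> : E = set0.
  by apply: funext => y; apply/propext; split => // Ey; apply: e; exists y.
by rewrite sup0.
Qed.

Lemma op_ge0 M W A : 0 <= opnorm M W A.
Proof. by apply: sup_ge0' => _ [X _ <-]; exact: sqrtr_ge0. Qed.

Lemma op_ge M W A c X : (forall X, wnorm W X = 1 -> wnorm M (einv A X) <= c) ->
  0 < wnorm W X -> wnorm M (einv A X) <= opnorm M W A * wnorm W X.
Proof.
move=> h npos; set n := wnorm W X in npos *.
have hc : 0 <= n^-1 by rewrite invr_ge0 ltW.
set U := vscl ((n^-1)%:C)%C X.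
have hU : wnorm W U = 1 by rewrite /U wnormZ // mulVf // gt_eqF.
have hle : wnorm M (einv A U) <= opnorm M W A.
  apply: ub_le_sup; first by exists c => _ [Y hY <-]; exact: h.
  by exists U.
move: hle; rewrite /U einvZ wnormZ // => hle.
have -> : wnorm M (einv A X) = n * (n^-1 * wnorm M (einv A X)).
  by rewrite mulrA mulfV ?gt_eqF // mul1r.
by rewrite mulrC ler_wpM2r // ltW.
Qed.

Lemma wnorm_gt0 M Y : hpd M -> Y <> (fun _ => 0) -> 0 < wnorm M Y.
Proof.
case=> _ h /h; rewrite ltcE => /andP[_ hr].
by rewrite /wnorm sqrtr_gt0.
Qed.

End Alg.

Arguments nr_ge0 {R N I}.
Arguments opB {R N I}.
Arguments op_ge0 {R N I}.
Arguments op_le {R N I M W A c}.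
Arguments op_ge {R N I M W A c X}.
Arguments wnorm_gt0 {R N I M Y}.
Arguments wnorm_sqrt {R N I}.
Arguments einv0 {R N I}.

Theorem theorem6p16 (R : realType) (N : nat) (I : 'I_N -> nat)
  (A M Nw Mh Nh Nhi Adag At Atdag : tensor R I) :
  A <> @zeroT R N I ->
  hpd M -> hpd Nw ->
  is_hpd_sqrt Mh M -> is_hpd_sqrt Nh Nw -> is_inv Nhi Nh ->
  is_wmpinv M Nw A Adag ->
  At = ein (ein Mh A) Nhi ->
  is_wmpinv (@idT R N I) (@idT R N I) At Atdag ->
  1 <= opnorm M Nw A * opnorm Nw M Adag <= 4 * numradius At * numradius Atdag.
Proof.
move=> hA hM hW [hMh mh] [hNh nh] [ni1 ni2] [p1 p2 p3 p4] hAt [q1 q2 q3 q4].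
rewrite !ein_id1 in q3 q4.
have hMh' : ctr Mh = Mh by case: hMh.
have hNh' : ctr Nh = Nh by case: hNh.
have K : ein Atdag Mh = ein Nh Adag.
  subst At; exact: (@key R N I A Adag M Nw Mh Nh Nhi Atdag p1 p2 p3 p4 q1 q2 q3 q4 hMh mh hNh' nh ni1 ni2).
set w1 := numradius At; set w2 := numradius Atdag.
have w10 : 0 <= w1 := nr_ge0 At.
have w20 : 0 <= w2 := nr_ge0 Atdag.
have bound1 : forall X, wnorm Nw X = 1 -> wnorm M (einv A X) <= 2 * w1.
  move=> X hX; rewrite (wnorm_sqrt _ _ _ hMh' mh).
  have -> : einv Mh (einv A X) = einv At (einv Nh X).
    by rewrite hAt -!einv_ein !einA ni2 ein_id2.
  apply: le_trans (opB _ _) _.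
  by rewrite -(wnorm_sqrt _ _ _ hNh' nh) hX mulr1.
have bound2 : forall X, wnorm M X = 1 -> wnorm Nw (einv Adag X) <= 2 * w2.
  move=> X hX; rewrite (wnorm_sqrt _ _ _ hNh' nh).
  rewrite -einv_ein -K einv_ein.
  apply: le_trans (opB _ _) _.
  by rewrite -(wnorm_sqrt _ _ _ hMh' mh) hX mulr1.
set a := opnorm M Nw A; set b := opnorm Nw M Adag.
have a0 : 0 <= a := op_ge0 M Nw A.
have b0 : 0 <= b := op_ge0 Nw M Adag.
have ha : a <= 2 * w1 by apply: op_le => //; rewrite mulr_ge0.
have hb : b <= 2 * w2 by apply: op_le => //; rewrite mulr_ge0.
apply/andP; split; last first.
  have -> : 4 * w1 * w2 = (2 * w1) * (2 * w2) by ring.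
  exact: ler_pM.
have [X hX] : exists X, einv A X <> (fun _ => 0).
  case: (pselect (exists X, einv A X <> (fun _ => 0))) => // nX.
  exfalso; apply: hA; apply: funext => i; apply: funext => j.
  set ej : vtensor R I := fun k => if k == j then 1 else 0.
  case: (pselect (einv A ej = (fun _ => 0))) => [e|ne]; last first.
    by case: nX; exists ej.
  have := congr1 (fun f => f i) e; rewrite /= /einv /ej /zeroT => <-.
  rewrite (bigD1 j) //= eqxx mulr1 big1 ?addr0 // => k /negbTE ->.
  by rewrite mulr0.
set Y := einv A X; set Z := einv Adag Y.
have AZ : einv A Z = Y by rewrite /Z /Y -!einv_ein p1.
have hZ : Z <> (fun _ => 0).
  by move=> Z0; apply: hX; rewrite -/Y -AZ Z0 einv0.
have wY := wnorm_gt0 hM hX.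
have wZ := wnorm_gt0 hW hZ.
have h1 := op_ge bound1 wZ.
have h2 := op_ge bound2 wY.
rewrite AZ in h1.
have : wnorm M Y <= (a * b) * wnorm M Y.
  apply: le_trans h1 _; rewrite -mulrA ler_wpM2l //.
by rewrite -{1}(mul1r (wnorm M Y)) ler_pM2r.
Qed.
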